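(* Let $\mathbf{P}$ be a finite poset, $M,N$ $\mathbf{P}$-modules, and $(\mathbf{Q},f\dashv g,h\dashv i,\Gamma)$ a Galois coupling of $(M,N)$. Then $(\mathrm{Int}\,\overline{\mathbf{Q}},\ \mathrm{Int}\,\overline{f}\dashv\mathrm{Int}\,\overline{g},\ \mathrm{Int}\,\overline{h}\dashv\mathrm{Int}\,\overline{i},\ K(\Gamma))$ is a Galois coupling of $(K(M),K(N))$ (as $\mathrm{Int}\,\overline{\mathbf{P}}$-modules).
   Context: Fix a field $k$; $\mathrm{vect}$ is the category of finite-dimensional $k$-vector spaces. Finite posets are categories with a unique morphism $x\to y$ iff $x\le y$; for a finite poset $\mathbf{S}$, an $\mathbf{S}$-module is a functor $\mathbf{S}\to\mathrm{vect}$; for monotone $g$, $g^*$ is precomposition with $g$. A Galois insertion $f:\mathbf{Q}\rightleftarrows\mathbf{S}:g$ is a pair of monotone maps $f:\mathbf{Q}\to\mathbf{S}$, $g:\mathbf{S}\to\mathbf{Q}$ with $f(u)\le x\iff u\le g(x)$ and $f\circ g=\mathrm{id}_{\mathbf{S}}$. A Galois coupling of a pair $(A,B)$ of $\mathbf{S}$-modules is $(\mathbf{Q},f\dashv g,h\dashv i,\Gamma)$ with $\mathbf{Q}$ a finite poset, $f:\mathbf{Q}\rightleftarrows\mathbf{S}:g$ and $h:\mathbf{Q}\rightleftarrows\mathbf{S}:i$ Galois insertions, and a $\mathbf{Q}$-module $\Gamma$ with $g^*\Gamma\cong A$, $i^*\Gamma\cong B$. For a finite poset $\mathbf{S}$,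 $\overline{\mathbf{S}}=\mathbf{S}\sqcup\{\top\}$ with $s<\top$ for all $s$; for monotone $f$, $\overline{f}$ extends $f$ by $\top\mapsto\top$. $\mathrm{Int}\,\mathbf{S}=\{(x,y)\in\mathbf{S}\times\mathbf{S}\mid x\le y\}$ with product order; $(\mathrm{Int}\,f)(x,y)=(f(x),f(y))$. For an $\mathbf{S}$-module $M$, $\overline{M}$ extends $M$ to $\overline{\mathbf{S}}$ by $\overline{M}(\top)=0$, and $K(M)$ is the $\mathrm{Int}\,\overline{\mathbf{S}}$-module $K(M)((x,y))=\ker\overline{M}(x\le y)$ with structure map for $(x_1,y_1)\le(x_2,y_2)$ the restriction of $\overline{M}(x_1\le x_2)$ (here $K$ is applied both to $\mathbf{P}$-modules and to $\mathbf{Q}$-modules). *)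

(* Defs.v *)
From HB Require Import structures.
From mathcomp Require Import all_boot all_algebra.
Set Implicit Arguments. Unset Strict Implicit. Unset Printing Implicit Defensive.
Import GRing.Theory.
Local Open Scope ring_scope.

Record poset := Poset {
  pcar :> finType;
  ple : rel pcar;
  ple_refl : reflexive ple;
  ple_anti : antisymmetric ple;
  ple_trans : transitive ple }.

Definition pmonotone (S T : poset) (f : S -> T) : Prop :=
  forall x y, ple x y -> ple (f x) (f y).

Definition galois_insertion (Q S : poset) (f : Q -> S) (g : S -> Q) : Prop :=
  [/\ pmonotone f, pmonotone g,
      (forall (u : Q) (x : S), ple (f u) x = ple u (g x))
    & (forall x : S, f (g x) = x)].

(** S-modules (functors S -> vect), as data: a dimension for each point and a
    matrix for each pair (row-vector convention: v |-> v *m pmap x y).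
    Only the values on pairs x <= y are meaningful. *)
Record pmod (k : fieldType) (S : poset) := PMod {
  pdim : S -> nat;
  pmap : forall x y : S, 'M[k]_(pdim x, pdim y) }.

Definition is_pmod (k : fieldType) (S : poset) (M : pmod k S) : Prop :=
  (forall x, pmap M x x = 1%:M) /\
  (forall x y z, ple x y -> ple y z -> pmap M x z = pmap M x y *m pmap M y z).

Definition pull (k : fieldType) (S Q : poset) (g : S -> Q) (G : pmod k Q) : pmod k S :=
  @PMod k S (fun x => pdim G (g x)) (fun x y => pmap G (g x) (g y)).

Definition mod_iso (k : fieldType) (S : poset) (A B : pmod k S) : Prop :=
  exists (phi : forall x, 'M[k]_(pdim A x, pdim B x))
         (psi : forall x, 'M[k]_(pdim B x, pdim A x)),
    [/\ (forall x, phi x *m psi x = 1%:M),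
        (forall x, psi x *m phi x = 1%:M)
      & (forall x y, ple x y -> pmap A x y *m phi y = phi x *m pmap B x y)].

Definition galois_coupling (k : fieldType) (S : poset) (A B : pmod k S)
  (Q : poset) (f : Q -> S) (g : S -> Q) (h : Q -> S) (i : S -> Q)
  (Gamma : pmod k Q) : Prop :=
  [/\ is_pmod Gamma, galois_insertion f g, galois_insertion h i,
      mod_iso (pull g Gamma) A & mod_iso (pull i Gamma) B].

Definition ole (S : poset) (a b : option S) : bool :=
  match a, b with
  | _, None => true
  | None, Some _ => false
  | Some x, Some y => ple x y
  end.

Lemma ole_refl (S : poset) : reflexive (@ole S).
Proof. by case=> //= x; apply: ple_refl. Qed.

Lemma ole_anti (S : poset) : antisymmetric (@ole S).
Proof.
by case=> [x|] [y|] //= /andP[h1 h2]; congr Some; apply: ple_anti; rewrite h1 h2.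
Qed.

Lemma ole_trans (S : poset) : transitive (@ole S).
Proof. by case=> [x|] [y|] [z|] //=; apply: ple_trans. Qed.

Definition obar (S : poset) : poset :=
  @Poset (option S) (@ole S) (@ole_refl S) (@ole_anti S) (@ole_trans S).

Definition fbar (S T : poset) (f : S -> T) : obar S -> obar T := omap f.

Definition intv (S : poset) := {p : (S * S)%type | ple p.1 p.2}.

Definition intle (S : poset) (a b : intv S) : bool :=
  ple (val a).1 (val b).1 && ple (val a).2 (val b).2.

Lemma intle_refl (S : poset) : reflexive (@intle S).
Proof. by move=> a; rewrite /intle !ple_refl. Qed.

Lemma intle_anti (S : poset) : antisymmetric (@intle S).
Proof.
move=> [[a1 a2] ha] [[b1 b2] hb] /andP[/andP[h1 h2] /andP[h3 h4]] /=.
apply: val_inj => /=; congr pair; apply: ple_anti; rewrite /= in h1 h2 h3 h4.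
  by rewrite h1 h3.
by rewrite h2 h4.
Qed.

Lemma intle_trans (S : poset) : transitive (@intle S).
Proof.
move=> b a c /andP[h1 h2] /andP[h3 h4]; apply/andP; split.
  exact: ple_trans h1 h3.
exact: ple_trans h2 h4.
Qed.

Definition IntP (S : poset) : poset :=
  @Poset (intv S) (@intle S) (@intle_refl S) (@intle_anti S) (@intle_trans S).

(** (Int f)(x,y) = (f x, f y); for non-monotone f the pair might not be an
    interval, in which case an arbitrary default is used (irrelevant for
    monotone f, the only case used). *)
Definition Int_map (S T : poset) (f : S -> T) (a : IntP S) : IntP T :=
  let x := (val a).1 in let y := (val a).2 in
  insubd (exist (fun p : T * T => ple p.1 p.2) (f x, f x) (ple_refl (f x)))
         (f x, f y).

Definition bdim (k : fieldType) (S : poset) (M : pmod k S) (o : obar S) : nat :=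
  if o is Some x then pdim M x else 0%N.

Definition bmap (k : fieldType) (S : poset) (M : pmod k S) (a b : obar S)
  : 'M[k]_(bdim M a, bdim M b) :=
  match a as a', b as b' return 'M[k]_(bdim M a', bdim M b') with
  | Some x, Some y => pmap M x y
  | _, _ => 0
  end.

Definition Mbar (k : fieldType) (S : poset) (M : pmod k S) : pmod k (obar S) :=
  @PMod k (obar S) (bdim M) (@bmap k S M).

(** K(M): K(M)(x,y) = ker Mbar(x <= y), represented by the basis
    row_base (kermx _) of the kernel {v | v *m Mbar(x<=y) = 0}; the structure
    map is the restriction of Mbar(x1 <= x2), written in these bases. *)
Definition Kdim (k : fieldType) (S : poset) (M : pmod k S) (p : IntP (obar S)) : nat :=
  \rank (kermx (pmap (Mbar M) (val p).1 (val p).2)).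

Definition Kbasis (k : fieldType) (S : poset) (M : pmod k S) (p : IntP (obar S))
  : 'M[k]_(Kdim M p, pdim (Mbar M) (val p).1) :=
  row_base (kermx (pmap (Mbar M) (val p).1 (val p).2)).

Definition Kmap (k : fieldType) (S : poset) (M : pmod k S) (p q : IntP (obar S))
  : 'M[k]_(Kdim M p, Kdim M q) :=
  Kbasis M p *m pmap (Mbar M) (val p).1 (val q).1 *m pinvmx (Kbasis M q).

Definition Kmod (k : fieldType) (S : poset) (M : pmod k S) : pmod k (IntP (obar S)) :=
  @PMod k (IntP (obar S)) (Kdim M) (@Kmap k S M).

(* Main.v *)
Require Import Defs.
From HB Require Import structures.
From mathcomp Require Import all_boot all_algebra.
Require Import Defs.
Set Implicit Arguments. Unset Strict Implicit. Unset Printing Implicit Defensive.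
Import GRing.Theory.
Local Open Scope ring_scope.

Section Aux.
Variable k : fieldType.

Lemma flat_eq (m : nat) (A B : 'M[k]_(m, 0)) : A = B.
Proof. by rewrite [A]thinmx0 [B]thinmx0. Qed.

Definition KdimG (X : poset) (A : pmod k X) (p : IntP X) : nat :=
  \rank (kermx (pmap A (val p).1 (val p).2)).
Definition KbG (X : poset) (A : pmod k X) (p : IntP X)
  : 'M[k]_(KdimG A p, pdim A (val p).1) :=
  row_base (kermx (pmap A (val p).1 (val p).2)).
Definition KmapG (X : poset) (A : pmod k X) (p q : IntP X)
  : 'M[k]_(KdimG A p, KdimG A q) :=
  KbG A p *m pmap A (val p).1 (val q).1 *m pinvmx (KbG A q).
Definition KG (X : poset) (A : pmod k X) : pmod k (IntP X) :=
  @PMod k (IntP X) (@KdimG X A) (@KmapG X A).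

Lemma KbG_ker (X : poset) (A : pmod k X) p :
  KbG A p *m pmap A (val p).1 (val p).2 = 0.
Proof. by apply/eqP; rewrite -sub_kermx /KbG eq_row_base submx_refl. Qed.

Lemma sub_KbG (X : poset) (A : pmod k X) p m (v : 'M[k]_(m, pdim A (val p).1)) :
  v *m pmap A (val p).1 (val p).2 = 0 -> (v <= KbG A p)%MS.
Proof. by move=> e; rewrite /KbG eq_row_base sub_kermx e. Qed.

Lemma KbGK (X : poset) (A : pmod k X) p : KbG A p *m pinvmx (KbG A p) = 1%:M.
Proof.
apply: (row_free_inj (row_base_free _)); rewrite /= mul1mx mulmxKpV //.
Qed.

Lemma memK (X : poset) (A : pmod k X) p q : is_pmod A -> intle p q ->
  (KbG A p *m pmap A (val p).1 (val q).1 <= KbG A q)%MS.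
Proof.
move=> [_ hA] /andP[h1 h2]; apply: sub_KbG.
rewrite -mulmxA -hA //; last exact: (valP q).
rewrite (hA _ (val p).2) //; last exact: (valP p).
by rewrite mulmxA KbG_ker mul0mx.
Qed.

Lemma KG_pmod (X : poset) (A : pmod k X) : is_pmod A -> is_pmod (KG A).
Proof.
move=> hA; split.
  by move=> x; rewrite /= /KmapG hA.1 mulmx1 KbGK.
move=> x y z hxy hyz; change (KmapG A x z = KmapG A x y *m KmapG A y z).
rewrite /KmapG [@pinvmx]lock [@KbG]lock !mulmxA -!lock mulmxKpV; last exact: memK.
case: hA => _ hA.
case/andP: hxy => h1 _; case/andP: hyz => h2 _.
by rewrite (hA _ (val y).1) // [@pinvmx]lock [@KbG]lock mulmxA.
Qed.

Lemma K_iso (X Y : poset) (A : pmod k X) (B : pmod k Y) (G : Y -> X)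
  (r : IntP Y -> IntP X)
  (T : forall a o, 'M[k]_(pdim A a, pdim B o))
  (S : forall o a, 'M[k]_(pdim B o, pdim A a)) :
  is_pmod A -> is_pmod B -> pmonotone G ->
  (forall p, val (r p) = (G (val p).1, G (val p).2)) ->
  (forall a o, a = G o -> T a o *m S o a = 1%:M) ->
  (forall a o, a = G o -> S o a *m T a o = 1%:M) ->
  (forall a b o o', a = G o -> b = G o' -> ple o o' ->
     pmap A a b *m T b o' = T a o *m pmap B o o') ->
  mod_iso (pull r (KG A)) (KG B).
Proof.
move=> hA hB mG hr hTS hST hN.
have hr1 p : (val (r p)).1 = G (val p).1 by rewrite hr.
have hr2 p : (val (r p)).2 = G (val p).2 by rewrite hr.
have hS a b o o' : a = G o -> b = G o' -> ple o o' ->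
    S o a *m pmap A a b = pmap B o o' *m S o' b.
  move=> ea eb le.
  rewrite -[S o a *m _]mulmx1 -(hTS b o' eb) mulmxA -(mulmxA (S o a)).
  by rewrite (hN _ _ _ _ ea eb le) mulmxA (hST _ _ ea) mul1mx.
have memA p : (KbG A (r p) *m T (val (r p)).1 (val p).1 <= KbG B p)%MS.
  apply: sub_KbG.
  by rewrite -mulmxA -(hN _ (val (r p)).2 _ _ (hr1 p) (hr2 p) (valP p))
     mulmxA KbG_ker mul0mx.
have memB p : (KbG B p *m S (val p).1 (val (r p)).1 <= KbG A (r p))%MS.
  apply: sub_KbG.
  by rewrite -mulmxA (hS _ _ _ (val p).2 (hr1 p) (hr2 p) (valP p))
     mulmxA KbG_ker mul0mx.
exists (fun p => KbG A (r p) *m T (val (r p)).1 (val p).1 *m pinvmx (KbG B p)).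
exists (fun p => KbG B p *m S (val p).1 (val (r p)).1 *m pinvmx (KbG A (r p))).
split.
- move=> p; rewrite [@pinvmx]lock [@KbG]lock !mulmxA -!lock (mulmxKpV (memA p)).
  rewrite -(mulmxA (KbG A (r p)) (T _ _)) hTS ?hr1 //.
  by rewrite mulmx1 KbGK.
- move=> p; rewrite [@pinvmx]lock [@KbG]lock !mulmxA -!lock (mulmxKpV (memB p)).
  rewrite -(mulmxA (KbG B p) (S _ _)) hST ?hr1 //.
  by rewrite mulmx1 KbGK.
- move=> x y hxy.
  have [h1 h2] : ple (val x).1 (val y).1 /\ ple (val x).2 (val y).2.
    by case/andP: hxy.
  have hxy' : intle (r x) (r y).
    by rewrite /intle hr1 hr2 hr1 hr2 (mG _ _ h1) (mG _ _ h2).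
  change (KmapG A (r x) (r y) *m (KbG A (r y) *m T (val (r y)).1 (val y).1 *m pinvmx (KbG B y))
    = (KbG A (r x) *m T (val (r x)).1 (val x).1 *m pinvmx (KbG B x)) *m KmapG B x y).
  rewrite /KmapG [@pinvmx]lock [@KbG]lock !mulmxA -!lock.
  rewrite (mulmxKpV (memK hA hxy')) (mulmxKpV (memA x)).
  rewrite -(mulmxA (KbG A (r x)) (pmap A _ _)) -(mulmxA (KbG A (r x)) (T _ _)).
  by rewrite (hN _ _ _ _ (hr1 x) (hr1 y) h1).
Qed.

Lemma mx00 (A B : 'M[k]_(0, 0)) : A = B.
Proof. exact: flat_eq. Qed.

Lemma Mbar_pmod (P : poset) (M : pmod k P) : is_pmod M -> is_pmod (Mbar M).
Proof.
move=> [h1 h2]; split.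
  by case=> [x|] /=; [exact: h1 | exact: mx00].
case=> [x|] [y|] [z|] //= hxy hyz; try exact: flat_eq.
exact: h2.
Qed.

Lemma fbar_gi (Q S : poset) (f : Q -> S) (g : S -> Q) :
  galois_insertion f g -> @galois_insertion (obar Q) (obar S) (fbar f) (fbar g).
Proof.
case=> mf mg adj ret; split.
- by case=> [x|] [y|] //=; apply: mf.
- by case=> [x|] [y|] //=; apply: mg.
- by case=> [u|] [x|] //=.
- by case=> [x|] //=; rewrite ret.
Qed.

Lemma Int_map_val (S T : poset) (F : S -> T) p : pmonotone F ->
  val (Int_map F p) = (F (val p).1, F (val p).2).
Proof. by move=> mF; rewrite /Int_map insubdK //; apply: mF; exact: (valP p). Qed.

Lemma Int_gi (Q S : poset) (F : Q -> S) (G : S -> Q) :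
  galois_insertion F G -> @galois_insertion (IntP Q) (IntP S) (Int_map F) (Int_map G).
Proof.
case=> mF mG adj ret; split.
- move=> a b /andP[h1 h2]; rewrite /= /intle !Int_map_val //=.
  by rewrite (mF _ _ h1) (mF _ _ h2).
- move=> a b /andP[h1 h2]; rewrite /= /intle !Int_map_val //=.
  by rewrite (mG _ _ h1) (mG _ _ h2).
- by move=> u x; rewrite /= /intle !Int_map_val //= !adj.
- move=> x; apply: val_inj; rewrite Int_map_val // Int_map_val //= !ret.
  by case: (val x).
Qed.

Lemma iso_bar (P Q : poset) (M : pmod k P) (Gamma : pmod k Q) (f : Q -> P) (g : P -> Q) :
  is_pmod Gamma -> is_pmod M -> galois_insertion f g ->
  mod_iso (pull g Gamma) M ->
  mod_iso (pull (Int_map (fbar g)) (Kmod Gamma)) (Kmod M).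
Proof.
move=> hG hM gi [phi [psi [h1 h2 h3]]].
have [_ mg _ _] := fbar_gi gi.
pose T := fun (a : obar Q) (o : obar P) =>
  match a as a', o as o' return 'M[k]_(bdim Gamma a', bdim M o') with
  | Some x, Some y => pmap Gamma x (g y) *m phi y
  | _, _ => 0 end.
pose S := fun (o : obar P) (a : obar Q) =>
  match o as o', a as a' return 'M[k]_(bdim M o', bdim Gamma a') with
  | Some y, Some x => psi y *m pmap Gamma (g y) x
  | _, _ => 0 end.
apply: (@K_iso (obar Q) (obar P) (Mbar Gamma) (Mbar M) (fbar g) _ T S).
- exact: Mbar_pmod.
- exact: Mbar_pmod.
- exact: mg.
- by move=> p; rewrite Int_map_val.
- case=> [x|] [y|] //= e; try exact: mx00.
  case: e => ->; by rewrite hG.1 mul1mx mulmx1 h1.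
- case=> [x|] [y|] //= e; try exact: mx00.
  case: e => ->; by rewrite hG.1 mul1mx mulmx1 h2.
- case=> [x|] [x'|] [y|] [y'|] //= ea eb le; try exact: flat_eq.
  case: ea => ->; case: eb => ->.
  by rewrite !hG.1 !mul1mx; exact: h3.
Qed.

End Aux.

Theorem lemma6p11 (k : fieldType) (P : poset) (M N : pmod k P)
  (Q : poset) (f : Q -> P) (g : P -> Q) (h : Q -> P) (i : P -> Q)
  (Gamma : pmod k Q) :
  is_pmod M -> is_pmod N ->
  galois_coupling M N f g h i Gamma ->
  galois_coupling (Kmod M) (Kmod N)
    (Int_map (fbar f)) (Int_map (fbar g))
    (Int_map (fbar h)) (Int_map (fbar i))
    (Kmod Gamma).
Proof.
move=> hM hN [hG gi1 gi2 iso1 iso2]; split.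
- exact: (KG_pmod (Mbar_pmod hG)).
- exact: (Int_gi (fbar_gi gi1)).
- exact: (Int_gi (fbar_gi gi2)).
- exact: (iso_bar hG hM gi1 iso1).
- exact: (iso_bar hG hN gi2 iso2).
Qed.
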